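(* Let $\mathcal{D}=\{(\mathbf{x}_i,y_i)\}_{i\in\mathcal{D}}$ be a finite training set with inputs $\mathcal{X}=\{\mathbf{x}_i\}_{i\in\mathcal{D}}$, let $\boldsymbol{\phi}_i=\boldsymbol{\phi}(\mathbf{x}_i)\in\mathbb{R}^P$, and consider the generalized linear model $f_{\mathbf{w}}^i=\boldsymbol{\phi}_i^\top\mathbf{w}$, $\mathbf{w}\in\mathbb{R}^P$. Let $A$ be the (strictly convex, differentiable) log-partition function of a scalar exponential family, $h=A'$, and $\ell(y,h(f))=-yf+A(f)$, with $\ell_i(\mathbf{w})=\ell(y_i,h(f_{\mathbf{w}}^i))$. Let $\mathcal{R},\mathcal{G}:\mathbb{R}^P\to\mathbb{R}$ be strictly convex differentiable regularizers, and let $$\mathbf{w}_*=\arg\min_{\mathbf{w}}\sum_{i\in\mathcal{D}}\ell_i(\mathbf{w})+\mathcal{R}(\mathbf{w}),\qquad \mathbf{w}_{\mathcal{G}}=\arg\min_{\mathbf{w}}\sum_{i\in\mathcal{D}}\ell_i(\mathbf{w})+\mathcal{G}(\mathbf{w}).$$ Let $\boldsymbol{\eta}_*=\nabla\mathcal{R}(\mathbf{w}_* )$, let $\mathcal{R}^*$ be the convex conjugate of $\mathcal{R}$, and define $$\mathcal{B}_{\mathcal{G}\mathcal{R}}(\mathbf{w}\|\mathbf{w}_* )=\mathcal{G}(\mathbf{w})+\mathcal{R}^*(\boldsymbol{\eta}_* )-\mathbf{w}^\top\boldsymbol{\eta}_*,$$ $$\mathcal{K}(\mathbf{w};\mathbf{w}_*,\mathcal{M})=\sum_{i\in\mathcal{M}}\ell\big(h(f_{\mathbf{w}_*}^i),h(f_{\mathbf{w}}^i)\big)+\mathcal{B}_{\mathcal{G}\mathcal{R}}(\mathbf{w}\|\mathbf{w}_*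 ),\qquad \hat{\mathbf{w}}_{\mathcal{G}}=\arg\min_{\mathbf{w}}\mathcal{K}(\mathbf{w};\mathbf{w}_*,\mathcal{M}),$$ where $\ell(h(f_{\mathbf{w}_*}^i),h(f_{\mathbf{w}}^i))=-h(f_{\mathbf{w}_*}^i)f_{\mathbf{w}}^i+A(f_{\mathbf{w}}^i)$. If $\mathcal{M}=\mathcal{X}$, then $\mathbf{w}_{\mathcal{G}}=\hat{\mathbf{w}}_{\mathcal{G}}$.
   Context: All minimizations are over $\mathbb{R}^P$. $\mathbf{w}_*$ is the base model trained with regularizer $\mathcal{R}$; the task is to obtain the model trained with a new regularizer $\mathcal{G}$ using only $\mathbf{w}_*$ and the memory inputs $\mathcal{M}$ (here the full input set $\mathcal{X}$), with the base model's predictions $h(f_{\mathbf{w}_*}^i)$ used in place of labels. *)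

(* Defs.v *)
From HB Require Import structures.
From mathcomp Require Import all_boot all_order all_algebra.
From mathcomp Require Import all_classical all_reals all_analysis.
Set Implicit Arguments. Unset Strict Implicit. Unset Printing Implicit Defensive.
Import Order.TTheory GRing.Theory Num.Theory.
Import numFieldNormedType.Exports.
Local Open Scope classical_set_scope.
Local Open Scope ring_scope.

Definition dot (R : realType) (P : nat) (u v : 'rV[R]_P) : R := (u *m v^T) 0 0.

Definition strictly_convex (R : realType) (V : lmodType R) (f : V -> R) : Prop :=
  forall (x y : V) (t : R), x != y -> 0 < t -> t < 1 ->
    f (t *: x + (1 - t) *: y) < t * f x + (1 - t) * f y.

Definition is_argmin (T : Type) (R : realType) (F : T -> R) (w : T) : Prop :=
  forall v, F w <= F v.

Definition grad (R : realType) (P : nat) (F : 'rV[R]_P -> R) (w : 'rV[R]_P)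
  : 'rV[R]_P := \row_j ('D_(delta_mx 0 j) F w).

Definition conj_fun (R : realType) (P : nat) (F : 'rV[R]_P -> R) (eta : 'rV[R]_P)
  : R := sup (range (fun w => dot w eta - F w)).

Definition glm_loss (R : realType) (A : R -> R) (y f : R) : R := - y * f + A f.

Definition meanf (R : realType) (A : R -> R) : R -> R := fun f => derive1 A f.

Definition breg_GR (R : realType) (P : nat) (G Rg : 'rV[R]_P -> R)
  (wstar w : 'rV[R]_P) : R :=
  G w + conj_fun Rg (grad Rg wstar) - dot w (grad Rg wstar).

Definition Kobj (R : realType) (P : nat) (A : R -> R) (G Rg : 'rV[R]_P -> R)
  (I : finType) (M : {pred I}) (phi : I -> 'rV[R]_P) (wstar w : 'rV[R]_P) : R :=
  \sum_(i in M) glm_loss A (meanf A (dot (phi i) wstar)) (dot (phi i) w)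
  + breg_GR G Rg wstar w.

(* Main.v *)
Require Import Defs.
From HB Require Import structures.
From mathcomp Require Import all_boot all_order all_algebra.
From mathcomp Require Import all_classical all_reals all_analysis.
From mathcomp Require Import ring lra.
Import Order.TTheory GRing.Theory Num.Theory.
Import numFieldNormedType.Exports.
Set Implicit Arguments. Unset Strict Implicit.
Local Open Scope classical_set_scope.
Local Open Scope ring_scope.

Lemma fermat (R : realType) (f : R -> R) (c : R) :
  derivable f c 1 -> (forall t, f c <= f t) -> 'D_1 f c = 0.
Proof.
move=> dfc cmin.
apply/eqP; rewrite eq_le; apply/andP; split.
  rewrite ['D_1 f c]cvg_at_leftE //.
  apply: limr_le.
    rewrite -(cvg_at_leftE (fun h : R => h^-1 *: ((f \o shift c) _ - f c))) //.
    apply: cvg_trans dfc; apply: cvg_app.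
    move=> A [e egt0 Ae]; exists e => // x xe xgt0; apply: Ae => //.
    exact/ltr0_neq0.
  near=> h; apply: mulr_le0_ge0.
    by rewrite invr_le0; apply: ltW; near: h; exists 1 => /=.
  by rewrite subr_ge0; apply: cmin.
rewrite ['D_1 f c]cvg_at_rightE //.
apply: limr_ge.
  rewrite -(cvg_at_rightE (fun h : R => h^-1 *: ((f \o shift c) _ - f c))) //.
  apply: cvg_trans dfc; apply: cvg_app.
  move=> A [e egt0 Ae]; exists e => // x xe xgt0; apply: Ae => //.
  exact/lt0r_neq0.
near=> h; apply: mulr_ge0.
  by rewrite invr_ge0; apply: ltW; near: h; exists 1 => /=.
by rewrite subr_ge0; apply: cmin.
Unshelve. all: by end_near. Qed.

Section S.
Variable (R : realType) (P : nat).

Lemma D_dir (F : 'rV[R]_P -> R) w v :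
  'D_v F w = 'D_1 (fun t : R => F (t *: v + w)) 0.
Proof.
rewrite /derive; set g1 := fun h => h^-1 *: _; set g2 := fun h => h^-1 *: _.
suff -> : g1 = g2 by [].
by rewrite funeqE /g1 /g2 => h /=; rewrite addr0 scale0r add0r [_%:A]mulr1.
Qed.

Lemma derivable_dir (F : 'rV[R]_P -> R) w v :
  derivable F w v <-> derivable (fun t : R => F (t *: v + w)) 0 1.
Proof. exact: derivable1P. Qed.

Lemma dotDZ (u v w : 'rV[R]_P) (a : R) : dot u (a *: v + w) = a * dot u v + dot u w.
Proof. by rewrite /dot linearD linearZ /= mulmxDr -scalemxAr !mxE. Qed.

Lemma dotC (u v : 'rV[R]_P) : dot u v = dot v u.
Proof.
rewrite /dot !mxE; apply: eq_bigr => k _; rewrite !mxE mulrC //.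
Qed.

Lemma dot_sumr (I : finType) (u : 'rV[R]_P) (c : I -> R) (p : I -> 'rV[R]_P) :
  dot u (\sum_i c i *: p i) = \sum_i c i * dot u (p i).
Proof.
rewrite /dot linear_sum /= mulmx_sumr summxE; apply: eq_bigr => i _.
by rewrite linearZ /= -scalemxAr mxE.
Qed.

Lemma min_D0 (F : 'rV[R]_P -> R) w v :
  derivable F w v -> (forall u, F w <= F u) -> 'D_v F w = 0.
Proof.
move=> dF Fmin; rewrite D_dir; apply: fermat.
  by apply/derivable_dir.
by move=> t; rewrite scale0r add0r.
Qed.


Lemma aff_der (a b : R) : is_derive (0:R) (1:R) (fun t : R => t * b + a) b.
Proof.
have := is_deriveD (is_deriveM (@is_derive_id R R^o 0 1) (@is_derive_cst R R^o R^o b 0 1)) (@is_derive_cst R R^o R^o a 0 1).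
move=> H. apply: is_derive_eq H _.
by rewrite /= scaler0 add0r addr0 [_ *: _]mulr1.
Qed.

Lemma term_der (A : R -> R) (dA : forall t, differentiable A t) (yv a b : R) :
  is_derive (0:R) (1:R) (fun t : R => glm_loss A yv (t * b + a)) ((- yv + meanf A a) * b).
Proof.
have aff := aff_der a b.
have dcomp : derivable (A \o (fun t : R => t * b + a)) 0 1.
  apply/derivable1_diffP; apply: differentiable_comp; last exact: dA.
  by apply/derivable1_diffP; exact: ex_derive.
have Hc : is_derive (0:R) (1:R) (A \o (fun t : R => t * b + a)) (meanf A a * b).
  apply: DeriveDef => //.
  rewrite -derive1E derive1_comp; last 2 first.
  - exact: ex_derive.
  - by apply/derivable1_diffP.
  by rewrite /meanf mul0r add0r [X in _ * X]derive1E derive_val.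
have H := is_deriveD (@is_deriveZ R R^o R^o _ (- yv) 0 1 _ aff) Hc.
apply: is_derive_eq H _.
by rewrite mulrDl.
Qed.

Lemma dotZ (u v : 'rV[R]_P) (a : R) : dot u (a *: v) = a * dot u v.
Proof. by rewrite /dot linearZ /= -scalemxAr mxE. Qed.

Lemma dot_delta (u : 'rV[R]_P) j : dot u (delta_mx 0 j) = u 0 j.
Proof. by rewrite /dot trmx_delta -colE mxE. Qed.

Lemma L_der (A : R -> R) (dA : forall t, differentiable A t) n (y : 'I_n -> R)
  (ph : 'I_n -> 'rV[R]_P) (w v : 'rV[R]_P) :
  is_derive w v (fun w => \sum_(i < n) glm_loss A (y i) (dot (ph i) w))
    (\sum_(i < n) (- y i + meanf A (dot (ph i) w)) * dot (ph i) v).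
Proof.
set L := fun w => _.
have Hg : is_derive (0:R) (1:R) (fun t : R => L (t *: v + w))
    (\sum_(i < n) (- y i + meanf A (dot (ph i) w)) * dot (ph i) v).
  have E : (fun t : R => L (t *: v + w)) =
     \sum_(i < n) (fun t : R => glm_loss A (y i) (t * dot (ph i) v + dot (ph i) w)).
    rewrite fct_sumE; apply: funext => t; rewrite /L.
    by apply: eq_bigr => i _; rewrite dotDZ.
  rewrite E; apply: is_derive_sum => i; exact: term_der.
apply: DeriveDef.
  by apply/derivable_dir; exact: ex_derive.
by rewrite D_dir derive_val.
Qed.

End S.

Lemma convA (R : realType) (A : R -> R) : strictly_convex A ->
  forall a c t : R, 0 < t -> t < 1 -> A (t * a + (1 - t) * c) <= t * A a + (1 - t) * A c.
Proof.
move=> sc a c t t0 t1; case: (eqVneq a c) => [->|ne].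
  have -> : t * c + (1 - t) * c = c by ring.
  have -> : t * A c + (1 - t) * A c = A c by ring.
  exact: lexx.
exact/ltW/(sc a c t ne t0 t1).
Qed.

Lemma fin (R : realType) (a b c d e f : R) :
  b < 2^-1 * d + (1 - 2^-1) * f -> a <= 2^-1 * c + (1 - 2^-1) * e ->
  c + d <= a + b -> e + f <= c + d -> c + d <= e + f -> False.
Proof. lra. Qed.

Theorem theorem2 (R : realType) (P n : nat) (X : Type)
  (x : 'I_n -> X) (y : 'I_n -> R) (phi : X -> 'rV[R]_P)
  (A : R -> R) (Rg G : 'rV[R]_P -> R) (wstar wG whatG : 'rV[R]_P) :
  strictly_convex A -> (forall t : R, differentiable A t) ->
  strictly_convex Rg -> (forall w, differentiable Rg w) ->
  strictly_convex G -> (forall w, differentiable G w) ->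
  is_argmin (fun w => \sum_(i < n) glm_loss A (y i) (dot (phi (x i)) w) + Rg w) wstar ->
  is_argmin (fun w => \sum_(i < n) glm_loss A (y i) (dot (phi (x i)) w) + G w) wG ->
  (* memory M = X, the full input set: all training indices *)
  is_argmin (Kobj A G Rg (@predT 'I_n) (fun i => phi (x i)) wstar) whatG ->
  wG = whatG.
Proof.
move=> scA dA scR dR scG dG minR minG minK.
set ph := fun i => phi (x i).
set L := fun w => \sum_(i < n) glm_loss A (y i) (dot (ph i) w).
set h := fun i => meanf A (dot (ph i) wstar).
have Lder v := L_der dA y ph wstar v.
have eta : grad Rg wstar = \sum_(i < n) (y i - h i) *: ph i.
  apply/rowP => j; rewrite !mxE summxE.
  have E : (fun w => L w + Rg w) = L + Rg by [].
  set e := delta_mx 0 j : 'rV[R]_P.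
  have dL : derivable L wstar e by case: (Lder e).
  have dRg : derivable Rg wstar e by apply: diff_derivable.
  have D0 : 'D_e (L + Rg) wstar = 0 by apply: min_D0 => //; exact: derivableD.
  rewrite deriveD // in D0.
  move: D0; case: (Lder e) => _; rewrite -/L => -> D0.
  have -> : 'D_(delta_mx 0 j) Rg wstar = - \sum_(i < n) (- y i + h i) * dot (ph i) (delta_mx 0 j).
    by apply/eqP; rewrite -addr_eq0 addrC D0.
  rewrite -sumrN; apply: eq_bigr => i _; rewrite dot_delta !mxE; ring.
set FG := fun w => L w + G w.
set C := conj_fun Rg (grad Rg wstar).
have KE w : Kobj A G Rg (@predT 'I_n) ph wstar w = FG w + C.
  rewrite /Kobj /breg_GR -/C eta dot_sumr /FG /L.
  under [X in _ - X]eq_bigr do rewrite dotC.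
  have S : \sum_(i in @predT 'I_n) glm_loss A (meanf A (dot (ph i) wstar)) (dot (ph i) w)
     - \sum_(i < n) (y i - h i) * dot (ph i) w = \sum_(i < n) glm_loss A (y i) (dot (ph i) w).
    rewrite (eq_bigl xpredT) // -sumrB; apply: eq_bigr => i _; rewrite /glm_loss /h.
    ring.
  rewrite -S; ring.
have minFh v : FG whatG <= FG v.
  by have := minK v; rewrite !KE lerD2r.
have minFG v : FG wG <= FG v by exact: minG.
case: (eqVneq wG whatG) => // ne.
set t : R := 2^-1.
have t0 : 0 < t by rewrite invr_gt0.
have t1 : t < 1 by rewrite invf_lt1 // ltr1n.
set m := t *: wG + (1 - t) *: whatG.
have Gm : G m < t * G wG + (1 - t) * G whatG by exact: scG.
have Lm : L m <= t * L wG + (1 - t) * L whatG.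
  rewrite /L mulr_sumr mulr_sumr -big_split /=; apply: ler_sum => i _.
  rewrite /m dotDZ dotZ /glm_loss.
  have := convA scA (dot (ph i) wG) (dot (ph i) whatG) t0 t1.
  move=> H; set a := dot (ph i) wG in H *; set c := dot (ph i) whatG in H *.
  have : - y i * (t * a + (1 - t) * c) = t * (- y i * a) + (1 - t) * (- y i * c) by ring.
  by move=> ->; rewrite !mulrDr addrACA; apply: lerD.
have h1 := minFG m; have h2 := minFh wG; have h3 := minFG whatG.
rewrite /FG in h1 h2 h3.
by case: (fin Gm Lm h1 h2 h3).
Qed.
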